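(* Let $d\geq 1$ and let $n,m$ be integers with $\binom{d}{2}\leq m\leq dn-\binom{d+1}{2}$ and such that $m\bmod d=0$ if $d$ is odd and $m\bmod d=\frac{d}{2}$ if $d$ is even. Then there exists a $d$-degenerate graph $G$ with $n$ vertices and $m$ edges such that $$c(G)= n+\frac{(2^d-1)m}{d}-\frac{(d-3)2^d+d+1}{2}.$$
   Context: All graphs are finite, simple and undirected. A graph $G$ is $d$-degenerate if every subgraph of $G$ has a vertex of degree at most $d$. A clique of a graph $G$ is a (possibly empty) set of pairwise adjacent vertices; $c(G)$ denotes the number of cliques of $G$ (including the empty clique, all single vertices and all edges). *)

(* Defs.v *)
From mathcomp Require Import all_boot all_order all_algebra.
Set Implicit Arguments. Unset Strict Implicit. Unset Printing Implicit Defensive.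

Definition simple_graph (T : finType) (e : rel T) : Prop :=
  symmetric e /\ irreflexive e.

Definition is_clique (T : finType) (e : rel T) (A : {set T}) : bool :=
  [forall x in A, forall y in A, (x != y) ==> e x y].

(* c(G): number of cliques, including the empty one. *)
Definition nb_cliques (T : finType) (e : rel T) : nat :=
  #|[set A : {set T} | is_clique e A]|.

Definition nb_edges (T : finType) (e : rel T) : nat :=
  #|[set A : {set T} | (#|A| == 2) && is_clique e A]|.

Definition degenerate (d : nat) (T : finType) (e : rel T) : Prop :=
  forall (S : {set T}) (f : rel T),
    S != set0 ->
    symmetric f ->
    (forall x y, f x y -> [&& e x y, x \in S & y \in S]) ->
    exists2 v, v \in S & #|[set u | f v u]| <= d.

(* Main.v *)
Require Import Defs.
From mathcomp Require Import all_boot all_order all_algebra.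
From mathcomp Require Import ring lra zify.
Import GRing.Theory Num.Theory.

Lemma count_split (T : finType) (A : {set T}) (Q : pred {set T}) :
  (forall C, Q C -> #|C :\: A| <= 1) ->
  #|[set C | Q C]| = #|[set C | Q C & C \subset A]|
     + \sum_v #|[set C | Q C & v \in C :\: A]|.
Proof.
move=> H.
have E1 : forall P : pred {set T}, #|[set C | P C]| = \sum_(C | P C) 1.
  by move=> P; rewrite -sum1_card; apply: eq_bigl => C; rewrite inE.
rewrite E1 (eq_bigr (fun C : {set T} => ((C \subset A) : nat) + #|C :\: A|)); last first.
  move=> C /H; rewrite -setD_eq0 -cards_eq0.
  by case: (#|C :\: A|) => [|[|]].
rewrite big_split /=; congr (_ + _).
  rewrite E1 big_mkcondr /=; apply: eq_bigr => C _; by case: (C \subset A).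
rewrite (eq_bigr (fun C : {set T} => \sum_v ((v \in C :\: A) : nat))); last first.
  move=> C _; rewrite -sum1_card big_mkcond /=; apply: eq_bigr => v _.
  by case: (v \in C :\: A).
rewrite exchange_big /=; apply: eq_bigr => v _.
rewrite E1 big_mkcondr /=; apply: eq_bigr => C _; by case: (v \in C :\: A).
Qed.

Section Graph.
Variables (d b n : nat).
Hypothesis hdb : d <= b.
Hypothesis hbn : b <= n.

Definition gr : rel 'I_n := fun x y =>
  (x != y) && (((x < d) && (y < b)) || ((y < d) && (x < b))).

Definition AA : {set 'I_n} := [set x : 'I_n | x < d].

Lemma gr_sym : symmetric gr.
Proof. by move=> x y; rewrite /gr eq_sym orbC. Qed.

Lemma gr_irr : irreflexive gr.
Proof. by move=> x; rewrite /gr eqxx. Qed.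

Lemma cardAA : #|AA| = d.
Proof.
have hdn : d <= n by apply: leq_trans hbn.
have -> : AA = [set widen_ord hdn i | i in 'I_d].
  apply/setP => x; rewrite inE; apply/idP/imsetP.
    by move=> h; exists (Ordinal h) => //; apply: val_inj.
  by case=> i _ ->; rewrite /= ltn_ord.
rewrite card_imset ?card_ord //.
by move=> i j /(congr1 val) /= /val_inj.
Qed.

Lemma cliqueP {C : {set 'I_n}} {x y : 'I_n} :
  is_clique gr C -> x \in C -> y \in C -> x != y -> gr x y.
Proof.
by move=> /forallP /(_ x) /implyP /(_ _) H xC yC nxy;
  move: (H xC) => /forallP /(_ y) /implyP /(_ yC) /implyP; apply.
Qed.

Lemma clique_sub (C : {set 'I_n}) : C \subset AA -> is_clique gr C.
Proof.
move=> /subsetP sub; apply/forallP => x; apply/implyP => xC.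
apply/forallP => y; apply/implyP => yC; apply/implyP => nxy.
move: (sub x xC) (sub y yC); rewrite !inE /gr nxy => hx hy.
by rewrite hx (leq_trans hy hdb).
Qed.

Lemma gr_out {x y : 'I_n} : d <= x -> gr x y -> (y < d) && (x < b).
Proof.
move=> hx; rewrite /gr => /andP [_ /orP [/andP [h _]|//]].
by rewrite ltnNge hx in h.
Qed.

Lemma clique_le1 (C : {set 'I_n}) : is_clique gr C -> #|C :\: AA| <= 1.
Proof.
move=> cl; apply/card_le1_eqP => x y; rewrite !inE -!leqNgt.
move=> /andP [hx xC] /andP [hy yC].
apply/eqP; apply/negPn/negP => nxy.
move: (gr_out hy (cliqueP cl yC xC nxy)) => /andP [h _].
by rewrite ltnNge hx in h.
Qed.

Lemma clique_v (C : {set 'I_n}) (v : 'I_n) : d <= v -> v < b ->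
  (is_clique gr C && (v \in C)) = (C :\ v \subset AA) && (v \in C).
Proof.
move=> hv hvb; apply/idP/idP.
  move=> /andP [cl vC]; rewrite vC andbT; apply/subsetP => x.
  rewrite !inE => /andP [nxv xC].
  by rewrite eq_sym in nxv; move: (gr_out hv (cliqueP cl vC xC nxv)) => /andP [].
move=> /andP [sub vC]; rewrite vC andbT.
apply/forallP => x; apply/implyP => xC.
apply/forallP => y; apply/implyP => yC; apply/implyP => nxy.
have inA : forall z, z \in C -> z != v -> z < d.
  by move=> z zC nzv; have := subsetP sub z; rewrite !inE nzv zC => /(_ isT).
rewrite /gr nxy.
case: (eqVneq x v) => [exv|nxv].
  subst x; rewrite eq_sym in nxy; rewrite (inA y yC nxy) hvb.
  by rewrite orbT.
case: (eqVneq y v) => [->|nyv]; first by rewrite inA //= hvb.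
by rewrite inA // (leq_trans (inA y yC nyv) hdb).
Qed.

Lemma clique_big (C : {set 'I_n}) (v : 'I_n) : b <= v ->
  (is_clique gr C && (v \in C)) = (C == [set v]).
Proof.
move=> hv; apply/idP/idP.
  move=> /andP [cl vC]; apply/eqP/setP => x; rewrite inE.
  apply/idP/idP => [xC|/eqP ->//].
  apply/negPn/negP => nxv; rewrite eq_sym in nxv.
  move: (gr_out (leq_trans hdb hv) (cliqueP cl vC xC nxv)) => /andP [_].
  by rewrite ltnNge hv.
move=> /eqP ->; rewrite set11 andbT; apply/forallP => x; apply/implyP.
rewrite inE => /eqP ->; apply/forallP => y; apply/implyP.
by rewrite inE => /eqP ->; rewrite eqxx.
Qed.

Lemma piece_img (P : pred nat) (v : 'I_n) : d <= v -> v < b ->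
  [set C : {set 'I_n} | (P #|C| && is_clique gr C) & v \in C :\: AA]
  = [set v |: X | X in [set X : {set 'I_n} | (X \subset AA) & P #|X|.+1]].
Proof.
move=> hv hvb.
have vA : v \notin AA by rewrite inE -leqNgt.
have vC : forall C : {set 'I_n}, (v \in C :\: AA) = (v \in C) by move=> C; rewrite inE vA.
apply/setP => C; rewrite [in LHS]inE vC -andbA clique_v //.
apply/idP/imsetP.
  move=> /and3P [hP sub vinC]; exists (C :\ v); last by rewrite setD1K.
  rewrite inE sub /=.
  by move: hP; rewrite -{1}(setD1K vinC) cardsU1 setD11.
case=> X; rewrite inE => /andP [sub hP] ->.
have vX : v \notin X by apply/negP => /(subsetP sub); rewrite (negPf vA).
rewrite cardsU1 vX hP /= setU11 andbT setU1K //.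
Qed.


Lemma card_piece (P : pred nat) (v : 'I_n) : d <= v -> v < b ->
  #|[set C : {set 'I_n} | (P #|C| && is_clique gr C) & v \in C :\: AA]|
  = #|[set X : {set 'I_n} | (X \subset AA) & P #|X|.+1]|.
Proof.
move=> hv hvb; rewrite piece_img // card_in_imset //.
have vA : v \notin AA by rewrite inE -leqNgt.
move=> X Y; rewrite !inE => /andP [sX _] /andP [sY _] E.
have vX : v \notin X by apply/negP => /(subsetP sX); rewrite (negPf vA).
have vY : v \notin Y by apply/negP => /(subsetP sY); rewrite (negPf vA).
by rewrite -(setU1K vX) -(setU1K vY) E.
Qed.

Lemma F_cl (v : 'I_n) :
  #|[set C | is_clique gr C & v \in C :\: AA]|
  = if v < d then 0 else if v < b then 2 ^ d else 1.
Proof.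
case: ifPn => hv; last rewrite -leqNgt in hv.
  apply/eqP; rewrite cards_eq0; apply/eqP/setP => C.
  by rewrite !inE hv /= andbF.
have vC : forall C : {set 'I_n}, (v \in C :\: AA) = (v \in C)
  by move=> C; rewrite !inE -leqNgt hv.
case: ifPn => hvb; last rewrite -leqNgt in hvb.
  transitivity #|[set C : {set 'I_n} | (predT #|C| && is_clique gr C) & v \in C :\: AA]|.
    by apply: eq_card; move=> C; rewrite !inE.
  rewrite card_piece // -cardAA -card_powerset.
  by apply: eq_card; move=> X; rewrite !inE andbT.
transitivity #|[set [set v]]|; last by rewrite cards1.

apply: eq_card; move=> C; rewrite !inE -leqNgt hv /= clique_big //.
Qed.

Lemma F_ed (v : 'I_n) :
  #|[set C : {set 'I_n} | ((#|C| == 2) && is_clique gr C) & v \in C :\: AA]|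
  = if v < d then 0 else if v < b then d else 0.
Proof.
case: ifPn => hv; last rewrite -leqNgt in hv.
  apply/eqP; rewrite cards_eq0; apply/eqP/setP => C.
  by rewrite !inE hv /= andbF.
have vC : forall C : {set 'I_n}, (v \in C :\: AA) = (v \in C)
  by move=> C; rewrite !inE -leqNgt hv.
case: ifPn => hvb; last rewrite -leqNgt in hvb.
  rewrite (card_piece (fun k => k == 2)) //.
  rewrite -[X in _ = X]cardAA -[X in _ = X]bin1 -cards_draws.
  by apply: eq_card; move=> X; rewrite !inE eqSS.
apply/eqP; rewrite cards_eq0; apply/eqP/setP => C.
rewrite !inE -leqNgt hv /= -andbA clique_big //.
by apply/negP => /andP [/eqP h /eqP E]; move: h; rewrite E cards1.
Qed.

Lemma sum_F (x y : nat) :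
  \sum_(v : 'I_n) (if v < d then 0 else if v < b then x else y)
  = (b - d) * x + (n - b) * y.
Proof.
rewrite -(big_mkord xpredT (fun i => if i < d then 0 else if i < b then x else y)).
rewrite (@big_cat_nat _ _ _ d 0 n _ _ (leq0n d) (leq_trans hdb hbn)) /=.
rewrite (@big_cat_nat _ _ _ b d n _ _ hdb hbn) /=.
rewrite (@eq_big_nat _ _ _ 0 d _ (fun _ => 0)); last by move=> i /andP [_ ->].
rewrite (@eq_big_nat _ _ _ d b _ (fun _ => x)); last first.
  by move=> i /andP [h1 h2]; rewrite ltnNge h1 h2.
rewrite (@eq_big_nat _ _ _ b n _ (fun _ => y)); last first.
  move=> i /andP [h1 h2]; rewrite ltnNge (leq_trans hdb h1) /= ltnNge h1 //.
by rewrite !sum_nat_const_nat muln0.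
Qed.


Lemma gr_degenerate : degenerate d gr.
Proof.
move=> S f S0 fsym fsub.
have key : forall v, v \in S -> (d <= v \/ forall u, u \in S -> u < d) ->
    #|[set u | f v u]| <= d.
  move=> v vS hv; rewrite -cardAA; apply: subset_leq_card; apply/subsetP => u.
  rewrite !inE => /fsub /and3P [g _ uS].
  case: hv => [hv|all]; last exact: all.
  by case/andP: (gr_out hv g).
case: (pickP [pred x | (x \in S) && (d <= x)]) => [v /andP [vS hv]|none].
  by exists v => //; apply: key => //; left.
case/set0Pn: S0 => v vS; exists v => //; apply: key => //; right => u uS.
by move: (none u); rewrite /= uS /= ltnNge => ->.
Qed.

End Graph.

Lemma bin2_double k : 'C(k, 2) * 2 = k * k.-1.
Proof.
elim: k => [//|k IH]; rewrite binS bin1 mulnDl IH; case: k {IH} => //= k; lia.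
Qed.

Theorem proposition4 (d n m : nat) :
  1 <= d ->
  'C(d, 2) <= m ->
  m + 'C(d.+1, 2) <= d * n ->
  (if odd d then m %% d = 0 else m %% d = d./2) ->
  exists e : rel 'I_n,
    [/\ simple_graph e, degenerate d e, nb_edges e = m &
     ((nb_cliques e)%:R : rat) =
       n%:R + (2 ^ d - 1)%:R * m%:R / d%:R
       - (((d%:Z - 3) * (2 ^ d)%:Z + d%:Z + 1)%:~R / 2)]%R.
Proof.
move=> hd h1 h2 hmod.
set c := 'C(d, 2) in h1 h2 *.
have hc2 : c * 2 = d * d.-1 by rewrite bin2_double.
have hcS : 'C(d.+1, 2) = c + d by rewrite binS bin1 addnC.
have cmod : m %% d = c %% d.
  move: hmod; have := odd_double_half d; case: (odd d) => /= hdd ->.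
    have -> : c = d./2 * d by lia.
    by rewrite modnMl.
  have -> : c = (d./2).-1 * d + d./2 by nia.
  by rewrite modnMDl modn_small //; lia.
have : d %| m - c by rewrite -eqn_mod_dvd // cmod.
case/dvdnP => k hk.
have hm : m = c + k * d by lia.
have hdk : d + k <= n.
  by rewrite -(leq_pmul2l hd); move: h2; rewrite hcS; nia.
have hdb : d <= d + k by apply: leq_addr.
exists (gr d (d + k) n); split.
- by split; [apply: gr_sym | apply: gr_irr].
- exact: (gr_degenerate _ _ _ hdb hdk).
- have E := @count_split _ (AA d n) (fun C => (#|C| == 2) && is_clique (gr d (d + k) n) C)
    (fun C h => @clique_le1 d (d + k) n C (proj2 (andP h))).
  rewrite /= in E; rewrite /nb_edges E.
  rewrite (eq_bigr _ (fun v _ => F_ed _ _ _ hdb hdk v)) (sum_F _ _ _ hdb hdk) addKn muln0 addn0 hm.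
  congr (_ + _); transitivity 'C(#|AA d n|, 2); last by rewrite (cardAA _ _ _ hdb hdk).
  rewrite -cards_draws.
  apply: eq_card; move=> C; rewrite !inE.
  by case: (C \subset AA d n) /idP => [/(clique_sub _ _ _ hdb)->|]; rewrite ?andbT ?andbF.
- have E := @count_split _ (AA d n) (fun C => is_clique (gr d (d + k) n) C)
    (fun C h => @clique_le1 d (d + k) n C h).
  rewrite /= in E; rewrite /nb_cliques E.
  rewrite (eq_bigr _ (fun v _ => F_cl _ _ _ hdb hdk v)) (sum_F _ _ _ hdb hdk) addKn muln1.
  have -> : #|[set C | is_clique (gr d (d + k) n) C & C \subset AA d n]| = 2 ^ d.
    transitivity #|powerset (AA d n)|; last by rewrite card_powerset (cardAA _ _ _ hdb hdk).
    apply: eq_card; move=> C; rewrite !inE.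
    by case: (C \subset AA d n) /idP => [/(clique_sub _ _ _ hdb)->|]; rewrite ?andbT ?andbF.
  have hd1 : (d.-1%:R : rat) = (d%:R - 1)%R.
    by rewrite -{2}(prednK hd) -addn1 natrD; ring.
  have hc' : (c%:R : rat) = (d%:R * (d%:R - 1) / 2)%R.
    have : ((c * 2)%:R : rat) = ((d * d.-1)%:R)%R by rewrite hc2.
    rewrite natrM natrM hd1 => <-.
    by field.
  have hP : 1 <= 2 ^ d by rewrite expn_gt0.
  rewrite hm !natrD !natrM !natrB // hc' !intrD !intrM intrB -!pmulrn.
  rewrite natrD; field.
  by rewrite pnatr_eq0 -lt0n.
Qed.
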